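(* Let $d\ge1$, let $P$ be a probability distribution on $\{0,1\}^d$ with $P(\nu)>0$ for all $\nu$, fix $\omega\in\{0,1\}^d$, and let $\mathcal{Q}_\omega:=\{y\in\mathbb{R}^d\mid A_\omega y\le b_\omega\}$, where $A_\omega$ is the $(2^d-1)\times d$ matrix with rows indexed by $\nu\in\{0,1\}^d\setminus\{\omega\}$, $A_\omega(\nu,i)=1$ if $\nu_i\ne\omega_i$ and $0$ otherwise, and $b_\omega(\nu)=\ln(P(\nu)/P(\omega))$. Let $f_\omega(y):=\prod_{i=1}^d(1+e^{y_i})$ for $y\in\mathbb{R}^d$. Let $F\subseteq\mathcal{Q}_\omega$ be a face of positive dimension and let $\hat y$ be a point in the relative interior of $F$. Then $f_\omega(\hat y)<\max_{y\in\mathcal{Q}_\omega}f_\omega(y)$. More specifically: (1) if the gradient $\nabla f_\omega(\hat y)$ is not orthogonal to $F$, then there is $\hat z\in F$ with $f_\omega(\hat z)>f_\omega(\hat y)$; (2) if $\nabla f_\omega(\hat y)$ is orthogonal to $F$, then $f_\omega(\hat y)$ is a local minimum of $f_\omega$ restricted to $F$.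
   Context: A face of $\mathcal{Q}_\omega$ is a nonempty set of the form $\{y\in\mathcal{Q}_\omega\mid A'_\omega y=b'_\omega\}$, where $A'_\omega$, $b'_\omega$ are the submatrix and subvector of $A_\omega$, $b_\omega$ formed by the same set of rows; its dimension is $d-\mathrm{rank}(A'_\omega)$. ''Orthogonal to $F$'' means orthogonal to every direction in the affine hull of $F$ (i.e. to $\{u-v: u,v\in F\}$). *)

(* Defs.v *)
From HB Require Import structures.
From mathcomp Require Import all_boot all_order all_algebra.
From mathcomp Require Import all_classical all_reals all_analysis.
Set Implicit Arguments. Unset Strict Implicit. Unset Printing Implicit Defensive.
Import Order.TTheory GRing.Theory Num.Theory.
Import numFieldNormedType.Exports.
Local Open Scope classical_set_scope.
Local Open Scope ring_scope.

(* The cube {0,1}^d, points nu with coordinates nu i : bool (true = 1). *)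
Definition cube (d : nat) := {ffun 'I_d -> bool}.

Definition dotr (R : realType) (d : nat) (u v : 'rV[R]_d) : R :=
  \sum_(i < d) u 0 i * v 0 i.

Definition Arow (R : realType) (d : nat) (omega nu : cube d) : 'rV[R]_d :=
  \row_i (if nu i != omega i then 1 else 0).

Definition bvec (R : realType) (d : nat) (P : cube d -> R) (omega nu : cube d) : R :=
  ln (P nu / P omega).

Definition Qset (R : realType) (d : nat) (P : cube d -> R) (omega : cube d)
  : set 'rV[R]_d :=
  [set y | forall nu : cube d, nu != omega ->
             dotr (Arow R omega nu) y <= bvec P omega nu].

Definition face_of (R : realType) (d : nat) (P : cube d -> R) (omega : cube d)
  (S : {set cube d}) : set 'rV[R]_d :=
  [set y | Qset P omega y /\
           forall nu, nu \in S -> dotr (Arow R omega nu) y = bvec P omega nu].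

Definition is_face (R : realType) (d : nat) (P : cube d -> R) (omega : cube d)
  (F : set 'rV[R]_d) : Prop :=
  exists S : {set cube d}, omega \notin S /\ F = face_of P omega S /\ F !=set0.

Definition eqset (R : realType) (d : nat) (P : cube d -> R) (omega : cube d)
  (F : set 'rV[R]_d) : {set cube d} :=
  [set nu | (nu != omega) &&
     `[< forall y, F y -> dotr (Arow R omega nu) y = bvec P omega nu >] ].

Definition subA (R : realType) (d : nat) (omega : cube d) (S : {set cube d})
  : 'M[R]_(#|S|, d) :=
  \matrix_(k < #|S|) Arow R omega (enum_val k).

Definition face_dim (R : realType) (d : nat) (P : cube d -> R) (omega : cube d)
  (F : set 'rV[R]_d) : nat :=
  (d - \rank (subA R omega (eqset P omega F)))%N.

Definition f_omega (R : realType) (d : nat) (y : 'rV[R]_d) : R :=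
  \prod_(i < d) (1 + expR (y 0 i)).

Definition grad (R : realType) (d : nat) (f : 'rV[R]_d -> R) (y : 'rV[R]_d)
  : 'rV[R]_d :=
  \row_i ('D_(delta_mx 0 i) f y).

Definition orth_to (R : realType) (d : nat) (g : 'rV[R]_d) (F : set 'rV[R]_d)
  : Prop :=
  forall u v, F u -> F v -> dotr g (u - v) = 0.

Definition aff_hull (R : realType) (d : nat) (F : set 'rV[R]_d) (y0 : 'rV[R]_d)
  : set 'rV[R]_d :=
  [set z | exists (n : nat) (c : 'I_n -> R) (u v : 'I_n -> 'rV[R]_d),
     (forall k, F (u k) /\ F (v k)) /\ z = y0 + \sum_(k < n) c k *: (u k - v k)].

Definition rel_interior (R : realType) (d : nat) (F : set 'rV[R]_d)
  : set 'rV[R]_d :=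
  [set y | F y /\ exists e : R, 0 < e /\
     forall z, aff_hull F y z -> `|z - y| < e -> F z].

(* Main.v *)
Require Import Defs.
From HB Require Import structures.
From mathcomp Require Import all_boot all_order all_algebra.
From mathcomp Require Import all_classical all_reals all_analysis.
From mathcomp Require Import ring lra.
Import Order.TTheory GRing.Theory Num.Theory.
Import numFieldNormedType.Exports.
Local Open Scope classical_set_scope.
Local Open Scope ring_scope.


Section SAlg.
Variable R : realType.

Lemma coordB (a h : R) :
  (1 + expR a) * expR (expR a / (1 + expR a) * h) <= 1 + expR (a + h).
Proof.
set E := expR a; set s := E / (1 + E).
have E0 : 0 < E by apply: expR_gt0.
have E1 : 1 + E != 0 by rewrite gt_eqF // ltr_wpDl.
have e1 := expR_ge1Dx (- (s * h)).
have e2 := expR_ge1Dx ((1 - s) * h).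
have -> : 1 + expR (a + h) =
   expR (s * h) * (expR (- (s * h)) + E * expR ((1 - s) * h)).
  rewrite mulrDr -expRD addrN expR0 mulrCA -expRD expRD /E; congr (_ + _ * _).
  by congr expR; ring.
rewrite [X in X <= _]mulrC ler_pM2l ?expR_gt0 //.
have -> : 1 + E = (1 + - (s * h)) + E * (1 + (1 - s) * h).
  rewrite /s; field => //.
apply: lerD => //; by rewrite ler_pM2l.
Qed.

Lemma coordA (a h : R) : h != 0 ->
  (1 + expR a) ^+ 2 < (1 + expR (a + h)) * (1 + expR (a - h)).
Proof.
move=> h0.
have eh : expR h != 1 by apply: contra h0 => /eqP; rewrite -expR0 => /expR_inj ->.
have H0 : 0 < expR h by apply: expR_gt0.
have Ea : 0 < expR a by apply: expR_gt0.
rewrite !expRD expRN.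
set x := expR h; set E := expR a.
have : 0 < (x - 1) ^+ 2 / x.
  by apply: divr_gt0 => //; rewrite lt_neqAle sqr_ge0 andbT eq_sym sqrf_eq0 subr_eq0.
have -> : (x - 1) ^+ 2 / x = x + x^-1 - 2 by field; rewrite gt_eqF.
move=> H.
have : 0 < E * (x + x^-1 - 2) by apply: mulr_gt0.
move=> HH; rewrite -subr_gt0; apply: (lt_le_trans HH); rewrite le_eqVlt; apply/orP; left; apply/eqP; field; by rewrite gt_eqF.
Qed.

Lemma prod_strict (I : finType) (F G : I -> R) (k : I) :
  (forall i, 0 < F i <= G i) -> F k < G k ->
  \prod_i F i < \prod_i G i.
Proof.
move=> H Hk.
rewrite (bigD1 k) //= [X in _ < X](bigD1 k) //=.
have PF : 0 < \prod_(i | i != k) F i.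
  by apply: prodr_gt0 => i _; case/andP: (H i).
have Gk : 0 < G k by case/andP: (H k) => h1 h2; apply: lt_le_trans h2.
apply: (@lt_le_trans _ _ (G k * \prod_(i | i != k) F i)).
  by rewrite ltr_pM2r.
rewrite ler_pM2l //; apply: ler_prod => i _; case/andP: (H i) => h1 h2.
by rewrite ltW.
Qed.

Lemma f_gt0 d (y : 'rV[R]_d) : 0 < f_omega y.
Proof.
rewrite /f_omega; apply: prodr_gt0 => i _; apply: ltr_wpDr => //; exact: expR_ge0.

Qed.

Lemma f_strict d (y v : 'rV[R]_d) : v != 0 ->
  f_omega y ^+ 2 < f_omega (y + v) * f_omega (y - v).
Proof.
move=> v0.
have [k vk] : exists k, v 0 k != 0.
  apply/existsP; apply: contraR v0; rewrite negb_exists => /forallP H.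
  apply/eqP/rowP => j; rewrite mxE; apply/eqP; exact: negbNE (H j).
rewrite /f_omega -prodrXl -big_split /=.
apply: (@prod_strict _ _ _ k).
  move=> i; rewrite !mxE; apply/andP; split.
    by apply: exprn_gt0; apply: ltr_wpDr; [exact: expR_ge0| exact: ltr01].
  have [->|hi] := eqVneq (v 0 i) 0.
    by rewrite oppr0 !addr0 expr2.
  by apply: ltW; apply: coordA.
by rewrite !mxE; apply: coordA.
Qed.

Lemma f_tangent d (y h : 'rV[R]_d) :
  \sum_i (expR (y 0 i) / (1 + expR (y 0 i)) * h 0 i) = 0 ->
  f_omega y <= f_omega (y + h).
Proof.
move=> H.
rewrite -[f_omega y]mulr1 -expR0 -H expR_sum /f_omega -big_split /=.
apply: ler_prod => i _; apply/andP; split.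
  by apply: mulr_ge0; [apply: addr_ge0 => //; exact: expR_ge0| exact: expR_ge0].
by rewrite mxE; apply: coordB.
Qed.
End SAlg.


Section SG.
Variable R : realType.

Lemma derive_line d (f : 'rV[R]_d -> R) a v :
  'D_v f a = 'D_(1:R) (fun h : R => f (h *: v + a)) 0.
Proof.
rewrite /derive; set g1 := (fun h => _); set g2 := (fun h => _); suff -> : g1 = g2 by []; apply: funext => h; rewrite /g1 /g2 /=.
by rewrite addr0 scale0r add0r /GRing.scale /= mulr1.
Qed.

Lemma is_derive_aff (C K : R) :
  is_derive (0:R) (1:R) (fun h : R => C + K * expR h) K.
Proof.
have h1 : is_derive (0:R) (1:R) (@expR R) (expR 0) := is_derive_expR 0.
have h2 := is_deriveZ K h1.
have h3 := is_deriveD (is_derive_cst C (0:R) (1:R)) h2.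
have -> : (fun h : R => C + K * expR h) = (cst C + K \*: (@expR R)) by apply: funext.
by apply: is_derive_eq h3 _; rewrite expR0 add0r /GRing.scale /= mulr1.
Qed.

Lemma grad_f d (y : 'rV[R]_d) i :
  grad (@f_omega R d) y 0 i = expR (y 0 i) * \prod_(j | j != i) (1 + expR (y 0 j)).
Proof.
rewrite mxE derive_line.
set C := \prod_(j | j != i) (1 + expR (y 0 j)).
have -> : (fun h : R => f_omega (h *: delta_mx 0 i + y)) =
          (fun h : R => C + (C * expR (y 0 i)) * expR h).
  apply: funext => h; rewrite /f_omega (bigD1 i) //= !mxE !eqxx /= ?mulr1.
  have -> : \prod_(j | j != i) (1 + expR ((h *: delta_mx 0 i + y) 0 j)) = C.
    apply: eq_bigr => j ji; rewrite !mxE eqxx andTb; case: (j =P i) ji => //= _ _; by rewrite mulr0 add0r.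
  by rewrite expRD; ring.

have H := is_derive_aff C (C * expR (y 0 i)).
by rewrite derive_val mulrC.
Qed.
End SG.


Section SK.
Variable R : realType.

Lemma fin_min (I : finType) (e : I -> R) :
  (forall i, 0 < e i) -> exists t : R, 0 < t /\ forall i, t <= e i.
Proof.
move=> He.
suff [t [t0 Ht]] : exists t : R, 0 < t /\ forall i, i \in enum I -> t <= e i.
  by exists t; split => // i; apply: Ht; rewrite mem_enum.
elim: (enum I) => [|x s [t [t0 Ht]]].
  by exists 1; split => //.
exists (Order.min (e x) t); split; first by rewrite lt_min He t0.
move=> i; rewrite in_cons => /orP [/eqP ->|iis].
  by rewrite ge_min lexx.
by rewrite ge_min (Ht _ iis) orbT.
Qed.

Lemma dotrD d (a y z : 'rV[R]_d) : dotr a (y + z) = dotr a y + dotr a z.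
Proof. by rewrite /dotr -big_split; apply: eq_bigr => i _; rewrite mxE mulrDr. Qed.

Lemma dotrZ d (a y : 'rV[R]_d) t : dotr a (t *: y) = t * dotr a y.
Proof. by rewrite /dotr mulr_sumr; apply: eq_bigr => i _; rewrite mxE mulrCA. Qed.

Lemma dotrN d (a y : 'rV[R]_d) : dotr a (- y) = - dotr a y.
Proof. by rewrite -scaleN1r dotrZ mulN1r. Qed.

Lemma two_points d (P : cube d -> R) (omega : cube d) (F : set 'rV[R]_d)
  (hF : is_face P omega F) (hdim : (0 < face_dim P omega F)%N) (yh : 'rV[R]_d)
  (Fyh : F yh) : exists a b, F a /\ F b /\ a != b.
Proof.
case: (pselect (exists a, F a /\ a != yh)) => [[a [Fa ay]]|Hno].
  by exists a, yh.
exfalso.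
have Fonly : forall a, F a -> a = yh.
  move=> a Fa; apply/eqP; apply/negP => ay; apply: Hno; exists a; split => //.
  exact/negP.
case: hF => S [oS [FE _]].
set E := eqset P omega F.
set A := subA R omega E.
have rk : (\rank A < d)%N.
  by move: hdim; rewrite /face_dim -/E -/A subn_gt0.
have [u [u0 hu]] : exists u : 'rV[R]_d, u != 0 /\ u *m A^T = 0.
  have : kermx A^T != 0.
    apply: contraTneq rk => K0.
    by rewrite -leqNgt -mxrank_tr -[X in (X <= _)%N]subn0 -(mxrank0 R d d) -K0 mxrank_ker subKn // ?rank_leq_col // rank_leq_row.
  move=> K0.
  have [k hk] : exists k, row k (kermx A^T) != 0.
    apply/existsP; apply: contraR K0; rewrite negb_exists => /forallP H.
    apply/eqP/row_matrixP => k; rewrite row0; exact/eqP/negbNE/H.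
  exists (row k (kermx A^T)); split => //.
  by rewrite -row_mul mulmx_ker row0.
have hE : forall nu, nu \in E -> dotr (Arow R omega nu) u = 0.
  move=> nu nuE.
  have := congr1 (fun M : 'rV[R]_#|E| => M 0 (enum_rank_in nuE nu)) hu.
  rewrite !mxE /= => H; rewrite -[RHS]H /dotr; apply: eq_bigr => i _.
  by rewrite !mxE enum_rankK_in // mulrC.
have hnE : forall nu, nu != omega -> nu \notin E ->
    dotr (Arow R omega nu) yh < bvec P omega nu.
  move=> nu no nE.
  have Qyh : Qset P omega yh by move: Fyh; rewrite FE => -[].
  rewrite lt_neqAle (Qyh nu no) andbT; apply/negP => /eqP ht.
  move: nE; rewrite /E /eqset inE no /= => /asboolPn H; apply: H.
  by move=> y /Fonly ->.
pose e nu := if (nu != omega) && (nu \notin E) then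
  (bvec P omega nu - dotr (Arow R omega nu) yh) / (`|dotr (Arow R omega nu) u| + 1)
  else 1.
have [t [t0 ht]] : exists t : R, 0 < t /\ forall nu, t <= e nu.
  apply: fin_min => nu; rewrite /e; case: ifP => // /andP [no nE].
  apply: divr_gt0; first by rewrite subr_gt0 hnE.
  by apply: ltr_wpDl.
have Fy' : F (yh + t *: u).
  have Qyh : Qset P omega yh by move: Fyh; rewrite FE => -[].
  have Syh : forall nu, nu \in S -> dotr (Arow R omega nu) yh = bvec P omega nu.
    by move: Fyh; rewrite FE => -[].
  have SE : forall nu, nu \in S -> nu \in E.
    move=> nu nuS; rewrite /E /eqset inE; apply/andP; split.
      by apply: contraNneq oS => <-.
    by apply/asboolP => y; rewrite FE => -[_]; apply.
  rewrite FE; split.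
    move=> nu no; rewrite dotrD dotrZ.
    case: (boolP (nu \in E)) => nE.
      by rewrite hE // mulr0 addr0 Qyh.
    have := ht nu; rewrite /e no nE /= => htn.
    rewrite -lerBrDl; apply: le_trans (ler_norm _) _.
    apply: (@le_trans _ _ (t * (`|dotr (Arow R omega nu) u| + 1))).
      by rewrite normrM (gtr0_norm t0) ler_pM2l // lerDl.
    by rewrite -ler_pdivlMr // ltr_wpDl.
  move=> nu nuS; rewrite dotrD dotrZ hE ?SE // mulr0 addr0; exact: Syh.
have := Fonly _ Fy'; move/eqP; rewrite -subr_eq0 addrC addKr scaler_eq0.
by rewrite (negbTE u0) orbF gt_eqF.
Qed.
End SK.


Section SM.
Variable R : realType.

Lemma cont_dotr d (a : 'rV[R]_d) : continuous (fun y : 'rV[R]_d => dotr a y).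
Proof.
rewrite /dotr; apply: continuous_big; first exact: add_continuous.
move=> i _ y.
apply: (@continuousM _ _ (cst (a 0 i)) (fun y : 'rV[R]_d => y 0 i) y).
  exact: cst_continuous.
exact: coord_continuous.
Qed.

Lemma cont_f d : continuous (@f_omega R d).
Proof.
rewrite /f_omega; apply: continuous_big; first exact: mul_continuous.
move=> i _ y.
have -> : (fun y : 'rV[R]_d => 1 + expR (y 0 i)) = (cst 1 + (fun y : 'rV[R]_d => expR (y 0 i))) by [].
apply: continuousD.
  exact: cst_continuous.
apply: continuous_comp; first exact: coord_continuous.
exact: continuous_expR.
Qed.

Lemma dotr_Arow_flip d (omega : cube d) (i : 'I_d) (y : 'rV[R]_d) :
  dotr (Arow R omega [ffun j => if j == i then ~~ omega j else omega j]) y = y 0 i.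
Proof.
rewrite /dotr (bigD1 i) //= big1 ?addr0.
  by rewrite !mxE ffunE eqxx; case: (omega i) => /=; rewrite mul1r.
move=> j ji; rewrite !mxE ffunE (negbTE ji) eqxx /= mul0r //.
Qed.

Lemma flip_neq d (omega : cube d) (i : 'I_d) :
  [ffun j => if j == i then ~~ omega j else omega j] != omega.
Proof.
apply/eqP => /(congr1 (fun g : cube d => g i)); rewrite ffunE eqxx.
by case: (omega i).
Qed.

Lemma eq_le_R (x y : R) : x = y -> x <= y.
Proof. by move=> ->. Qed.

Lemma max_exists d (P : cube d -> R) (omega : cube d) (y0 : 'rV[R]_d) :
  Qset P omega y0 ->
  exists ymax, Qset P omega ymax /\
     (forall y, Qset P omega y -> f_omega y <= f_omega ymax).
Proof.
move=> Qy0.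
set Q := Qset P omega.
set B := \sum_nu `|bvec P omega nu|.
have bB : forall nu, `|bvec P omega nu| <= B.
  move=> nu; rewrite /B (bigD1 nu) //= lerDl; apply: sumr_ge0 => *; exact: normr_ge0.
have B0 : 0 <= B by apply: le_trans (bB omega); exact: normr_ge0.
have yB : forall y, Q y -> forall i, y 0 i <= B.
  move=> y Qy i; have := Qy _ (flip_neq _ omega i); rewrite dotr_Arow_flip => h.
  by apply: (le_trans h); apply: le_trans (bB _); exact: ler_norm.
set M := (d%:R + 1) * B.
have M0 : 0 <= M by rewrite /M mulr_ge0 // addr_ge0.
pose clamp (y : 'rV[R]_d) : 'rV[R]_d := \row_i Order.max (y 0 i) (- M).
have clQ : forall y, Q y -> Q (clamp y).
  move=> y Qy nu no.
  have bnu : - B <= bvec P omega nu.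
    by rewrite lerNl; apply: le_trans (bB nu); rewrite -normrN ler_norm.
  case: (pselect (exists k, nu k != omega k /\ y 0 k < - M)) => [[k [nk yk]]|Hn].
    apply: (@le_trans _ _ (\sum_(i < d) (B - (i == k)%:R * (M + B)))).
      apply: ler_sum => i _; rewrite !mxE.
      have [->|ik] := eqVneq i k.
        rewrite nk /= !mul1r opprD addrCA subrr addr0.
        by rewrite ge_max (ltW yk) lexx.
      rewrite mul0r subr0.
      case: ifP => _; rewrite ?mul0r // mul1r ge_max (yB y Qy) /=.
      by apply: le_trans B0; rewrite oppr_le0.
    rewrite big_split /= sumr_const card_ord sumrN (bigD1 k) //= eqxx mul1r big1 ?addr0.
      rewrite /M -mulr_natl; lra.
    by move=> j jk; rewrite (negbTE jk) mul0r.
  apply: le_trans (Qy nu no); apply: eq_le_R; rewrite /dotr; apply: eq_bigr => i _.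
  rewrite !mxE; case: ifP => nik; rewrite ?mul0r // !mul1r.
  have : ~ (y 0 i < - M) by move=> h; apply: Hn; exists i; split; [by rewrite nik| exact h].
  by move/negP; rewrite -leNgt => h; rewrite max_l.
have clge : forall y, f_omega y <= f_omega (clamp y).
  move=> y; rewrite /f_omega; apply: ler_prod => i _; rewrite mxE.
  rewrite addr_ge0 ?expR_ge0 //= lerD2l ler_expR le_max lexx //.
pose box := [set v : 'rV[R]_d | forall i, `[- M, B]%classic (v ord0 i)].
have clbox : forall y, Q y -> box (clamp y).
  move=> y Qy i /=; rewrite in_itv /= mxE le_max lexx orbT /= ge_max (yB y Qy) /=.
  by apply: le_trans B0; rewrite oppr_le0.
have closedQ : closed Q.
  have -> : Q = \bigcap_(nu in [set nu | nu != omega])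
      ((fun y => dotr (Arow R omega nu) y) @^-1` [set x | x <= bvec P omega nu]).
    rewrite predeqE => y; split.
      by move=> Qy nu /= no; apply: Qy.
    by move=> H nu no; apply: (H nu).
  apply: closed_bigI => nu _; apply: preimage_closed; last exact: closed_le.
  by move=> y _; apply: cont_dotr.
have cK : compact (box `&` Q).
  apply: compact_closedI => //.
  apply: (@rV_compact _ _ (fun=> `[- M, B]%classic)) => _.
  exact: segment_compact.
have [c cK' cmax] : exists2 c, c \in (box `&` Q) & forall t, t \in (box `&` Q) -> f_omega t <= f_omega c.
  apply: compact_EVT_max => //.
    by exists (clamp y0); split; [apply: clbox | apply: clQ].
  exact: continuous_subspaceT (@cont_f d).
move/set_mem: cK' => [_ Qc].
exists c; split => // y Qy.
apply: le_trans (clge y) _; apply: cmax; apply: mem_set; split; [exact: clbox | exact: clQ].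
Qed.
End SM.

Theorem lemma5 (R : realType) (d : nat) (hd : (1 <= d)%N)
  (P : cube d -> R) (hPpos : forall nu, 0 < P nu)
  (hPsum : \sum_(nu : cube d) P nu = 1)
  (omega : cube d) (F : set 'rV[R]_d)
  (hF : is_face P omega F) (hdim : (0 < face_dim P omega F)%N)
  (yh : 'rV[R]_d) (hyh : rel_interior F yh) :
  (exists ymax, Qset P omega ymax /\
     (forall y, Qset P omega y -> f_omega y <= f_omega ymax) /\
     f_omega yh < f_omega ymax)
  /\ (~ orth_to (grad (@f_omega R d) yh) F ->
        exists zh, F zh /\ f_omega yh < f_omega zh)
  /\ (orth_to (grad (@f_omega R d) yh) F ->
        exists e : R, 0 < e /\
          forall z, F z -> `|z - yh| < e -> f_omega yh <= f_omega z).
Proof.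
case: hyh => Fyh [e [e0 He]].
have FQ : forall y, F y -> Qset P omega y.
  by case: hF => S [_ [FE _]] y; rewrite FE => -[].
have [zh [Fzh fz]] : exists zh, F zh /\ f_omega yh < f_omega zh.
  have [a [b [Fa [Fb ab]]]] := two_points _ _ _ _ _ hF hdim _ Fyh.
  set w := b - a.
  have w0 : w != 0 by rewrite /w subr_eq0 eq_sym.
  set s := e / (`|w| + 1).
  have s0 : 0 < s by rewrite /s divr_gt0 // ltr_wpDl.
  have sw : `|s *: w| < e.
    rewrite normrZ gtr0_norm // /s mulrAC ltr_pdivrMr ?ltr_wpDl //.
    by rewrite ltr_pM2l // ltrDl.
  have F1 : F (yh + s *: w).
    apply: He.
      exists 1%N, (fun _ => s), (fun _ => b), (fun _ => a); split => //.
      by rewrite big_ord1.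
    by rewrite addrC addKr.
  have F2 : F (yh - s *: w).
    apply: He.
      exists 1%N, (fun _ => - s), (fun _ => b), (fun _ => a); split => //.
      by rewrite big_ord1 scaleNr.
    by rewrite addrC addKr normrN.
  have := f_strict _ _ yh (s *: w); rewrite scaler_eq0 (negbTE w0) gt_eqF //= => /(_ isT) H.
  case: (ltP (f_omega yh) (f_omega (yh + s *: w))) => h1.
    by exists (yh + s *: w).
  case: (ltP (f_omega yh) (f_omega (yh - s *: w))) => h2.
    by exists (yh - s *: w).
  exfalso; move: H; apply/negP; rewrite -leNgt expr2.
  by apply: ler_pM => //; apply: ltW; apply: f_gt0.
split.
  have [ymax [Qm Hm]] := max_exists _ _ _ _ _ (FQ _ Fyh).
  exists ymax; split => //; split => //.
  by apply: lt_le_trans fz _; apply: Hm; apply: FQ.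
split.
  by move=> _; exists zh.
move=> orth; exists 1; split => // z Fz _.
have Horth := orth z yh Fz Fyh.
have -> : z = yh + (z - yh) by rewrite addrC subrK.
apply: f_tangent.
set h := z - yh.
have key : f_omega yh * (\sum_i (expR (yh 0 i) / (1 + expR (yh 0 i)) * h 0 i)) = 0.
  apply: (etrans _ Horth); rewrite /dotr mulr_sumr; apply: eq_bigr => i _; rewrite grad_f /f_omega (bigD1 i) //=.
  field; rewrite gt_eqF // ltr_wpDr // expR_ge0.
by move/eqP: key; rewrite mulf_eq0 gt_eqF ?f_gt0 //= => /eqP.
Qed.
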